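(* Let $K$ be an odd prime and $p,m\in\mathbb Z$ with $m\ge0$. Then $$\sum{}'_{\alpha}\check q^{\,p\alpha^2}\alpha^{2m}=x^{\max(0,\frac{K-1}2-m)}\,w\quad\text{for some }w\in\mathbb Z[\check q].$$
   Context: $\check q=e^{2\pi i/K}$, $x=\check q-1$. $\sum'_\alpha$ denotes the sum over odd integers $\alpha$ with $-K\le\alpha\le K$, where the two terms $\alpha=\pm K$ are each weighted by $\frac12$. *)

(* Defs.v *)
From HB Require Import structures.
From mathcomp Require Import all_boot all_order all_algebra.
From mathcomp Require Import complex.
From mathcomp Require Import all_classical all_reals all_analysis.
Set Implicit Arguments. Unset Strict Implicit. Unset Printing Implicit Defensive.
Import Order.TTheory GRing.Theory Num.Theory.
Local Open Scope ring_scope.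
Local Open Scope complex_scope.

Definition qcheck (R : realType) (K : nat) : complex R :=
  (cos (2 * pi / K%:R))%:C + 'i * (sin (2 * pi / K%:R))%:C.

Definition in_Zq (R : realType) (q z : complex R) : Prop :=
  exists P : {poly int}, z = (map_poly intr P).[q].

Definition sumw (R : realType) (K : nat) (a : int) : complex R :=
  if (a == K%:Z) || (a == - K%:Z) then 2^-1 else 1.

(* \sum'_alpha F alpha : over odd integers alpha with -K <= alpha <= K,
   alpha = i - K for i = 0 .. 2K, endpoint terms weighted by 1/2 *)
Definition sumprime (R : realType) (K : nat) (F : int -> complex R) : complex R :=
  \sum_(i < (2 * K).+1 | ~~ (2 %| (i%:Z - K%:Z))%Z)
     sumw R K (i%:Z - K%:Z) * F (i%:Z - K%:Z).

(* Main.v *)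
Require Import Defs.
From HB Require Import structures.
From mathcomp Require Import all_boot all_order all_algebra.
From mathcomp Require Import complex.
From mathcomp Require Import all_classical all_reals all_analysis.
From mathcomp Require Import ring zify.
Import Order.TTheory GRing.Theory Num.Theory.
Local Open Scope ring_scope.
Local Open Scope complex_scope.
Definition cis {R : realType} (t : R) : complex R := (cos t)%:C + 'i * (sin t)%:C.
Lemma cisE (R : realType) (t : R) : cis t = (cos t +i* sin t)%C.
Proof. by rewrite /cis; simpc. Qed.
Lemma cisD (R : realType) (s t : R) : cis s * cis t = cis (s + t).
Proof. rewrite !cisE; simpc; by rewrite cosD sinD (addrC (_ * sin t)) (mulrC (sin s)). Qed.
Lemma cisX (R : realType) (t : R) n : cis t ^+ n = cis (t *+ n).
Proof. elim: n => [|n IH]; first by rewrite expr0 mulr0n cisE cos0 sin0.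
by rewrite exprS IH cisD mulrS. Qed.
Lemma qK (R : realType) K : (0 < K)%N -> qcheck R K ^+ K = 1.
Proof. move=> K0. rewrite -/(cis _) cisX.
have -> : (2 * pi / K%:R) *+ K = pi *+ 2 :> R.
  rewrite -mulr_natr mulfVK; first by rewrite mulrC mulr_natr.
  by rewrite pnatr_eq0 -lt0n.
by rewrite cisE cos2pi sin2pi. Qed.
Lemma qneq1 (R : realType) K : (2 < K)%N -> qcheck R K != 1.
Proof. move=> K2. rewrite /qcheck -/(cis _) cisE. apply/eqP => /(congr1 (@complex.Im R)) /=.
apply/eqP; rewrite gt_eqF //. apply: sin_gt0_pi.
have K0 : (0:R) < K%:R by rewrite ltr0n; case: K K2.
rewrite divr_gt0 ?mulr_gt0 ?pi_gt0 //=.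
rewrite ltr_pdivrMr // mulrC ltr_pM2l ?pi_gt0 // ltr_nat //.
Qed.

Section T.
Variable (R : realType) (q : complex R).
Lemma ZqD a b : in_Zq q a -> in_Zq q b -> in_Zq q (a + b).
Proof. move=> [P ->] [Q ->]; exists (P + Q). by rewrite rmorphD hornerD. Qed.
Lemma ZqM a b : in_Zq q a -> in_Zq q b -> in_Zq q (a * b).
Proof. move=> [P ->] [Q ->]; exists (P * Q). by rewrite rmorphM hornerM. Qed.
Lemma ZqN a : in_Zq q a -> in_Zq q (- a).
Proof. move=> [P ->]; exists (- P). by rewrite rmorphN hornerN. Qed.
Lemma Zqint (z : int) : in_Zq q (z%:~R).
Proof. exists (z%:P). by rewrite map_polyC hornerC. Qed.
Lemma Zqq : in_Zq q q.
Proof. exists 'X. by rewrite map_polyX hornerX. Qed.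
Lemma Zq1 : in_Zq q 1.
Proof. by have := Zqint 1. Qed.
Lemma Zq0 : in_Zq q 0.
Proof. by have := Zqint 0. Qed.
Lemma Zqnat (n : nat) : in_Zq q (n%:R).
Proof. by have := Zqint n. Qed.
Lemma ZqX a n : in_Zq q a -> in_Zq q (a ^+ n).
Proof. move=> Ha; elim: n => [|n IH]; [exact: Zq1| rewrite exprS; exact: ZqM]. Qed.
Lemma Zqsum (I : finType) (P : pred I) (F : I -> complex R) :
  (forall i, P i -> in_Zq q (F i)) -> in_Zq q (\sum_(i | P i) F i).
Proof. move=> H; apply: (big_ind (in_Zq q)); [exact: Zq0|exact: ZqD|exact: H]. Qed.
Definition Dv n z := exists w, in_Zq q w /\ z = (q-1)^+n * w.
Lemma Dv0 n : Dv n 0.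
Proof. exists 0; split; [exact: Zq0| by rewrite mulr0]. Qed.
Lemma DvD n a b : Dv n a -> Dv n b -> Dv n (a + b).
Proof. move=> [u [Hu ->]] [v [Hv ->]]; exists (u + v); split; [exact: ZqD| by rewrite mulrDr]. Qed.
Lemma DvN n a : Dv n a -> Dv n (- a).
Proof. move=> [u [Hu ->]]; exists (- u); split; [exact: ZqN| by rewrite mulrN]. Qed.
Lemma DvM n a b : Dv n a -> in_Zq q b -> Dv n (a * b).
Proof. move=> [u [Hu ->]] Hb; exists (u * b); split; [exact: ZqM| by rewrite mulrA]. Qed.
Lemma DvX n j w : in_Zq q w -> (n <= j)%N -> Dv n ((q - 1)^+j * w).
Proof. move=> Hw Hnj; exists ((q-1)^+(j - n) * w); split.
  apply: ZqM => //; apply: ZqX; apply: ZqD; [exact: Zqq| apply: ZqN; exact: Zq1].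
by rewrite mulrA -exprD subnKC. Qed.
Lemma Dvsum n (I : finType) (P : pred I) (F : I -> complex R) :
  (forall i, P i -> Dv n (F i)) -> Dv n (\sum_(i | P i) F i).
Proof. move=> H; apply: (big_ind (Dv n)); [exact: Dv0|exact: DvD|exact: H]. Qed.
Lemma Zqx : in_Zq q (q - 1).
Proof. apply: ZqD; [exact: Zqq| apply: ZqN; exact: Zq1]. Qed.

Lemma DvK (K : nat) : prime K -> q ^+ K = 1 -> q != 1 ->
  forall r, (r <= K.-1)%N -> Dv r (K%:R).
Proof.
move=> pK qK q1.
have K1 : (1 < K)%N by exact: prime_gt1.
have x0 : q - 1 != 0 by rewrite subr_eq0.
have E : \sum_(i < K) (q-1)^+i *+ 'C(K, i.+1) = 0.
  have := exprD1n (q - 1) K; rewrite subrK qK big_ord_recl /= expr0 bin0 mulr1n.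
  move/esym/eqP; rewrite -subr_eq0 (addrC 1) addrK => /eqP H.
  apply: (mulfI x0); rewrite mulr0 mulr_sumr -[RHS]H.
  by apply: eq_bigr => i _; rewrite mulrnAr -exprS.
move: E; case: K pK qK K1 => // K' pK qK K1.
rewrite big_ord_recl /= expr0 bin1 => /eqP; rewrite addr_eq0 => /eqP E.
elim=> [|r IH] Hr; first by exists (K'.+1%:R); split; [exact: Zqnat| by rewrite expr0 mul1r].
have [w [Hw Ew]] := IH (ltnW Hr).
rewrite E; apply: DvN; apply: Dvsum => i _.
rewrite /bump /= add1n.
have [Hi|Hi] := ltnP (i.+2) K'.+1.
  have : (K'.+1 %| 'C(K'.+1, i.+2))%N by apply: prime_dvd_bin => //; rewrite Hi.
  case/dvdnP => b ->. rewrite mulrnA -mulr_natr Ew -mulr_natr -mulrA (mulrCA (b%:R : complex R)) !mulrA -exprD -mulrA.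
  apply: DvX; last by rewrite addSn ltnS leq_addl.
  by apply: ZqM => //; exact: Zqnat.
have Ei : i.+2 = K'.+1 by apply/eqP; rewrite eqn_leq Hi -(ltnS _ K'.+1) andbT; exact: (ltn_ord i).
rewrite Ei binn mulr1n -[_ ^+ _]mulr1. apply: DvX; first exact: Zq1.
by case: Ei => ->.
Qed.
End T.
Lemma PS (F : fieldType) (K : nat) : prime K -> K \in [pchar F] ->
  forall e, (e.+1 < K)%N -> \sum_(k < K) (k%:R : F) ^+ e = 0.
Proof.
move=> pK hK; elim/ltn_ind => e IH He.
have T : \sum_(0 <= k < K) (((k.+1)%:R : F) ^+ e.+1 - (k%:R) ^+ e.+1) = 0.
  rewrite (telescope_sumr (fun k => (k%:R : F) ^+ e.+1)) //.
  by rewrite (pcharf0 hK) expr0n /= subr0.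
have T2 : \sum_(i < e.+1) (\sum_(k < K) (k%:R : F) ^+ i) *+ 'C(e.+1, i) = 0.
  rewrite -[RHS]T big_mkord; under eq_bigr => i _ do rewrite -sumrMnl.
  rewrite exchange_big /=; apply: eq_bigr => k _.
  by rewrite -natr1 exprD1n [in RHS]big_ord_recr /= binn mulr1n addrK.
move: T2; rewrite big_ord_recr /= big1 ?add0r.
  move=> /eqP; rewrite -mulr_natr mulf_eq0 => /orP [/eqP //|].
  rewrite binSn -(dvdn_pcharf hK) => /dvdn_leq; rewrite ltnNge => /(_ isT) H.
  by move: He; rewrite ltnNge H.
move=> i _; rewrite IH ?mul0rn //; apply: (ltn_trans _ He); rewrite ltnS; exact: ltn_ord i.
Qed.
Lemma PSpoly (F : fieldType) (K : nat) (P : {poly F}) : prime K -> K \in [pchar F] ->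
  (size P <= K.-1)%N -> \sum_(k < K) P.[k%:R] = 0.
Proof.
move=> pK hK sP.
under eq_bigr => k _ do rewrite horner_coef.
rewrite exchange_big /= big1 // => i _.
rewrite -mulr_sumr (@PS F K pK hK) ?mulr0 //.
have := ltn_ord i; move: sP; case: K pK {hK} => // K' _ /= sP Hi.
by rewrite ltnS; exact: leq_trans Hi sP.
Qed.

Lemma size_prodQ (F : fieldType) (c : F) (j : nat) :
  (size (\prod_(i < j) (c *: 'X^2 - (i%:R)%:P))%R <= (2 * j).+1)%N.
Proof.
elim: j => [|j IH]; first by rewrite big_ord0 size_poly1.
rewrite big_ord_recr /=; apply: (leq_trans (size_polyMleq _ _)).
have H2 : (size (c *: 'X^2 - (j%:R : F)%:P)%R <= 3)%N.
  apply: (leq_trans (size_polyD _ _)); rewrite geq_max size_polyN.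
  rewrite (leq_trans (size_scale_leq _ _)) ?size_polyXn //.
  exact: leq_trans (size_polyC_leq1 _) _.
apply: leq_trans (_ : ((2 * j).+1 + 3).-1 <= _)%N.
  by rewrite -!subn1 leq_sub2r // leq_add.
by rewrite mulnS addnC.
Qed.
Lemma ffactR (F : fieldType) (M j : nat) :
  ((M ^_ j)%:R : F) = \prod_(i < j) (M%:R - i%:R).
Proof.
elim: j => [|j IH]; first by rewrite big_ord0.
rewrite ffactnSr natrM IH big_ord_recr /=.
have [jM|Mj] := leqP j M; first by rewrite natrB.
have -> : \prod_(i < j) ((M%:R : F) - i%:R) = 0.
  by rewrite -IH ffact_small.
by rewrite !mul0r.
Qed.

Lemma fact_ndvd (K j : nat) : prime K -> (j < K)%N -> ~~ (K %| j`!)%N.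
Proof.
move=> pK; elim: j => [|j IH] Hj; first by rewrite fact0 dvdn1; apply/negP => /eqP K1; move: pK; rewrite K1.
rewrite factS Euclid_dvdM // negb_or IH ?(ltn_trans _ Hj) //.
rewrite andbT; apply/negP => /(dvdn_leq (ltn0Sn _)); by rewrite leqNgt Hj.
Qed.

Lemma modzR (F : nzRingType) (K : nat) (z : int) : (K%:R : F) = 0 ->
  (((z %% K%:Z)%Z)%:~R : F) = z%:~R.
Proof.
move=> K0; have E := divz_eq z K%:Z.
transitivity ((((z %/ K%:Z)%Z * K%:Z + (z %% K%:Z)%Z))%:~R : F); last by rewrite -E.
by rewrite [in RHS]intrD [in RHS]intrM -pmulrn K0 mulr0 add0r.
Qed.

Definition alpha (K k : nat) : int := k%:Z * 2 - K%:Z.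
Definition Mk (K : nat) (p : int) (k : nat) : nat := absz ((p * alpha K k ^+ 2) %% K%:Z)%Z.

Lemma core (F : fieldType) (K : nat) (p : int) (m j : nat) :
  prime K -> K \in [pchar F] -> (2 * j + 2 * m < K.-1)%N ->
  ((\sum_(k < K) ('C(Mk K p k, j))%:Z * alpha K k ^+ (2 * m))%:~R : F) = 0.
Proof.
move=> pK hK Hjm.
have K0 : (K%:R : F) = 0 by exact: pcharf0.
have jf : (j`!%:R : F) != 0.
  rewrite -(dvdn_pcharf hK) fact_ndvd //; apply: (leq_ltn_trans _ (leq_trans Hjm (leq_pred _))).
  by rewrite mulSn -addnA leq_addr.
apply: (mulIf jf); rewrite mul0r rmorph_sum /= mulr_suml.
pose Q : {poly F} := ((2:F) ^+ (2 * m) *: 'X^(2 * m)) *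
   \prod_(i < j) ((p%:~R * 4) *: 'X^2 - (i%:R)%:P).
rewrite -[RHS](@PSpoly F K Q pK hK); last first.
  apply: (leq_trans (size_polyMleq _ _)).
  apply: leq_trans (_ : ((2 * m).+1 + (2 * j).+1).-1 <= _)%N.
    by rewrite -!subn1 leq_sub2r // leq_add // ?size_prodQ // (leq_trans (size_scale_leq _ _)) // size_polyXn.
  by rewrite addSn /= addnS addnC.
apply: eq_bigr => k _.
rewrite hornerM hornerZ hornerXn horner_prod.
have E1 : ((alpha K k ^+ (2 * m))%:~R : F) = (2:F) ^+ (2 * m) * k%:R ^+ (2 * m).
  rewrite rmorphXn /= /alpha rmorphB /= intrM -!pmulrn K0 subr0 -exprMn mulrC.
  done.
have E2 : (('C(Mk K p k, j))%:Z%:~R : F) * j`!%:R =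
    \prod_(i < j) ((p%:~R * 4) *: 'X^2 - (i%:R)%:P).[(k%:R : F)].
  rewrite -pmulrn -natrM bin_ffact ffactR; apply: eq_bigr => i _.
  rewrite hornerD hornerN hornerZ hornerXn hornerC; congr (_ - _).
  have Kn0 : K%:Z != 0 by rewrite eqz_nat; by case: (K) pK.
  rewrite [LHS]pmulrn /Mk gez0_abs ?modz_ge0 //.
  have Ed := divz_eq (p * alpha K k ^+ 2) K%:Z.
  have -> : (((p * alpha K k ^+ 2) %% K%:Z)%Z%:~R : F) = (p * alpha K k ^+ 2)%:~R.
    exact: modzR.
  rewrite rmorphM rmorphXn /= /alpha intrB intrM -!pmulrn K0 subr0.
  ring.
by rewrite intrM E1 -E2 mulrAC mulrC.
Qed.
Lemma par (i K : nat) : (2 %| i%:Z - K%:Z)%Z = (odd i == odd K).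
Proof. by rewrite -eqz_mod_dvd !modz_nat eqz_nat !modn2; case: (odd i); case: (odd K). Qed.
Lemma sum_pairs (V : zmodType) (f : nat -> V) n :
  \sum_(i < n.*2) f i = \sum_(k < n) (f k.*2 + f k.*2.+1).
Proof.
elim: n => [|n IH]; first by rewrite !big_ord0.
by rewrite doubleS !big_ord_recr /= IH addrA.
Qed.
Lemma sumprimeE (R : realType) (K : nat) (G : int -> complex R) : odd K ->
  G K%:Z = G (- K%:Z) -> sumprime K G = \sum_(k < K) G (alpha K k).
Proof.
move=> oK GK.
pose h := fun i : nat => if ~~ (2 %| (i%:Z - K%:Z))%Z then sumw R K (i%:Z - K%:Z) * G (i%:Z - K%:Z) else 0.
rewrite /sumprime big_mkcond /=.
transitivity (\sum_(i < (K.*2).+1) h i); first by rewrite -mul2n.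
rewrite big_ord_recr sum_pairs /=.
under eq_bigr => k _ do rewrite /h !par /= odd_double oK /= addr0 -muln2 PoszM.
rewrite /h par odd_double oK /=.
case: K oK GK h => // K' oK GK h.
rewrite big_ord_recl /= [in RHS]big_ord_recl /=.
have -> : sumw R K'.+1 (0%N%:Z * 2 - K'.+1%:Z) = 2^-1 by rewrite /sumw mul0r add0r eqxx orbT.
have -> : sumw R K'.+1 (K'.+1.*2%:Z - K'.+1%:Z) = 2^-1.
  by rewrite /sumw -addnn PoszD addrK eqxx.
have -> : (K'.+1.*2%:Z - K'.+1%:Z) = K'.+1%:Z by rewrite -addnn PoszD addrK.
rewrite GK /alpha mul0r add0r.
have -> : forall a b : complex R, 2^-1 * a + b + 2^-1 * a = a + b.
  have h2 : (2^-1 + 2^-1 : complex R) = 1.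
    by rewrite -[RHS](@mulVf _ 2) ?pnatr_eq0 // [in RHS]mulr_natr mulr2n.
  by move=> a b; rewrite addrAC -mulrDl h2 mul1r.
congr (_ + _); apply: eq_bigr => i _.
rewrite /sumw /bump /= add1n.
have -> : ((i.+1)%:Z * 2 - K'.+1%:Z == K'.+1%:Z) = false.
  rewrite subr_eq -PoszD -PoszM eqz_nat.
  have := ltn_ord i; apply: contraTF => /eqP; lia.
have -> : ((i.+1)%:Z * 2 - K'.+1%:Z == - K'.+1%:Z) = false.
  by rewrite subr_eq addNr -PoszM eqz_nat.
by rewrite mul1r.
Qed.

Lemma qexp (R : realType) (q : complex R) (K : nat) (z : int) :
  (0 < K)%N -> q ^+ K = 1 -> q ^ z = q ^+ absz (z %% K%:Z)%Z.
Proof.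
move=> K0 qK.
have qu : q \is a GRing.unit.
  rewrite unitfE; apply/eqP => q0; move: qK; rewrite q0 expr0n.
  by case: K K0 => // K' _ /= /eqP; rewrite eq_sym oner_eq0.
rewrite {1}(divz_eq z K%:Z) exprzDr // [((_ %/ _)%Z * _)%R]mulrC -exprz_exp.
have -> : q ^ (K%:Z) = 1 by rewrite -exprnP qK.
rewrite exp1rz mul1r exprnP gez0_abs ?modz_ge0 //.
by rewrite eqz_nat -lt0n.
Qed.

Lemma binsum (V : nzRingType) (x : V) (M K : nat) : (M < K)%N ->
  (x + 1) ^+ M = \sum_(j < K) x ^+ j *+ 'C(M, j).
Proof.
move=> MK; rewrite exprD1n (big_ord_widen K (fun j => x ^+ j *+ 'C(M, j))) //.
rewrite big_mkcond; apply: eq_bigr => j _.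
by case: ifP => // /negbT; rewrite -leqNgt => /bin_small ->; rewrite mulr0n.
Qed.

Theorem lemma2p1 (R : realType) (K : nat) (p : int) (m : nat) :
  prime K -> odd K ->
  exists w : complex R, in_Zq (qcheck R K) w /\
    sumprime K (fun a : int => qcheck R K ^ (p * a ^+ 2) * (a%:~R) ^+ (2 * m))
    = (qcheck R K - 1) ^+ (K.-1./2 - m)%N * w.
Proof.
move=> pK oK.
have K3 : (2 < K)%N.
  have := prime_gt1 pK; rewrite leq_eqVlt => /orP [/eqP K2|//].
  by move: oK; rewrite -K2.
have K0 : (0 < K)%N by apply: ltn_trans K3.
have hqK := @qK R K K0.
have hq1 := @qneq1 R K K3.
set q := qcheck R K in hqK hq1 *.
rewrite sumprimeE //; last first.
  by rewrite rmorphN /= !exprM !sqrrN.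
set n := (K.-1./2 - m)%N.
suff : Dv R q n (\sum_(k < K) (q ^ (p * alpha K k ^+ 2) * (alpha K k)%:~R ^+ (2 * m))) by [].
pose c := fun j : nat => \sum_(k < K) ('C(Mk K p k, j))%:Z * alpha K k ^+ (2 * m).
have -> : \sum_(k < K) (q ^ (p * alpha K k ^+ 2) * (alpha K k)%:~R ^+ (2 * m))
    = \sum_(j < K) (q - 1) ^+ j * (c j)%:~R.
  have MkK : forall k, (Mk K p k < K)%N.
    move=> k; rewrite /Mk -ltz_nat gez0_abs ?modz_ge0 ?ltz_pmod //.
    by rewrite eqz_nat -lt0n.
  under eq_bigr => k _ do rewrite (@qexp R q K _ K0 hqK) -[X in X ^+ _](subrK 1 q) (@binsum _ _ _ K (MkK k)) mulr_suml.
  rewrite exchange_big /=; apply: eq_bigr => j _.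
  rewrite /c rmorph_sum mulr_sumr; apply: eq_bigr => k _.
  by rewrite -mulr_natr -mulrA rmorphM rmorphXn /= -pmulrn.
apply: Dvsum => j _.
have [nj|jn] := leqP n j.
  by apply: DvX => //; exact: Zqint.
have Hjm : (2 * j + 2 * m < K.-1)%N.
  have := odd_double_half K.-1.
  have -> : odd K.-1 = false by case: (K) oK => //= K'; case: (odd K').
  move: jn; rewrite /n; set h := K.-1./2; rewrite -muln2 add0n; lia.
have cF := @core [the fieldType of 'F_K] K p m j pK (pchar_Fp pK) Hjm.
have : (K%:Z %| c j)%Z by rewrite (dvdz_pcharf (pchar_Fp pK)) cF.
case/dvdzP => d ->.
rewrite rmorphM /= -pmulrn mulrA mulrC.
apply: DvM; last by apply: ZqM; [apply: ZqX; exact: Zqx|exact: Zqint].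
apply: DvK => //.
have := odd_double_half K.-1; rewrite /n; set h := K.-1./2; lia.
Qed.
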